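(* For every Keedwell Sudoku board $B$ and every $g\in G_k$, the board $g\cdot B$ is Keedwell and has the same linearity degree as $B$.
   Context: A Sudoku board is a $9\times 9$ array with entries from $\{0,\dots,8\}$ such that every row, column and each of the nine $3\times 3$ blocks (subsquares) contains each symbol once; the subsquare in block-row $i$ and block-column $j$ ($i,j\in\{0,1,2\}$) is the $(i,j)$th subsquare. The full Sudoku symmetry group is $G_9=H_9\times S_9$, where $H_9$ is the group of cell rearrangements generated by permutations of the three bands (horizontal strips of blocks), permutations of the rows within a band, permutations of the three pillars (vertical strips of blocks), permutations of the columns within a pillar, and the transpose, and $S_9$ is the group of all relabelings (permutations of the symbols applied to every entry). For a $3\times 3$ array, let $\alpha$ cycle its rows down by one and $\beta$ cycle its columns right by one; both have order $3$. A Sudoku board $B$ with upper-left subsquare $K$ is Keedwell if there are exponents $c_{ij},d_{ij}\in\mathbb{Z}/3\mathbb{Z}$ ($i,j\in\{0,1,2\}$) with $c_{00}=d_{00}=0$ such that the $(i,j)$th subsquare of $B$ is $\alpha^{c_{ij}}\beta^{d_{ij}}K$; since $K$ has nine distinct entries, these exponent matrices $\{c_{ij}\}$, $\{d_{ij}\}$ are uniquely determined by $B$. A matrix $\{m_{ij}\}_{i,j\in\{0,1,2\}}$ over $\mathbb{Z}/3\mathbb{Z}$ is quasi-linear if $m_{ij}=m_{i0}+m_{0j}$ for all $i,j$. The linearity degree of a Keedwell board is the number (0, 1 or 2) of its two exponent matrices $\{c_{ij}\}$, $\{d_{ij}\}$ that are quasi-linear. $G_k$ is the set of all $g\in G_9$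 that map the set of Keedwell boards to itself. *)

(* Defs.v *)
From mathcomp Require Import all_boot all_order all_algebra all_fingroup.
Set Implicit Arguments. Unset Strict Implicit. Unset Printing Implicit Defensive.
Import GRing.Theory.

(* A row (resp. column) index of the 9x9 grid is encoded as a pair
   (block index, offset inside the block) in 'I_3 * 'I_3: the pair (i, a)
   stands for row (resp. column) 3*i + a. *)
Definition Idx : finType := ('I_3 * 'I_3)%type.
Definition Cell : finType := (Idx * Idx)%type.

Definition board := {ffun Cell -> 'I_9}.

Definition rowb (r : Idx) : {set Cell} := [set x : Cell | x.1 == r].
Definition colb (c : Idx) : {set Cell} := [set x : Cell | x.2 == c].
Definition blockb (i j : 'I_3) : {set Cell} :=
  [set x : Cell | (x.1.1 == i) && (x.2.1 == j)].

Definition each_once (B : board) (A : {set Cell}) : bool :=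
  [forall s : 'I_9, #|[set x in A | B x == s]| == 1].

Definition sudoku (B : board) : bool :=
  [forall r, each_once B (rowb r)] && [forall c, each_once B (colb c)] &&
  [forall i, forall j, each_once B (blockb i j)].

Definition band_f (s : {perm 'I_3}) (x : Cell) : Cell :=
  ((s x.1.1, x.1.2), x.2).
Definition row_f (i0 : 'I_3) (s : {perm 'I_3}) (x : Cell) : Cell :=
  ((x.1.1, if x.1.1 == i0 then s x.1.2 else x.1.2), x.2).
Definition pillar_f (s : {perm 'I_3}) (x : Cell) : Cell :=
  (x.1, (s x.2.1, x.2.2)).
Definition col_f (j0 : 'I_3) (s : {perm 'I_3}) (x : Cell) : Cell :=
  (x.1, (x.2.1, if x.2.1 == j0 then s x.2.2 else x.2.2)).
Definition transp_f (x : Cell) : Cell := (x.2, x.1).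

Definition H9gens : {set {perm Cell}} :=
  [set p : {perm Cell} |
     [exists s : {perm 'I_3}, [forall x, p x == band_f s x]]
  || [exists i0 : 'I_3, exists s : {perm 'I_3}, [forall x, p x == row_f i0 s x]]
  || [exists s : {perm 'I_3}, [forall x, p x == pillar_f s x]]
  || [exists j0 : 'I_3, exists s : {perm 'I_3}, [forall x, p x == col_f j0 s x]]
  || [forall x, p x == transp_f x]].

Definition H9 : {set {perm Cell}} := <<H9gens>>%g.

(* G_9 = H_9 x S_9 : pairs (h, sigma) with h in H_9, sigma any relabeling.
   Action: (h, sigma) . B  =  the board x |-> sigma (B (h^-1 x)). *)
Definition G9elt := ({perm Cell} * {perm 'I_9})%type.
Definition inG9 (g : G9elt) : bool := g.1 \in H9.
Definition gact9 (g : G9elt) (B : board) : board :=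
  [ffun x => g.2 (B ((g.1)^-1%g x))].

(* exponent matrices indexed by (i, j) in 'I_3 * 'I_3, entries in Z/3Z
   ('I_3 = 'Z_3 with its Zp ring structure). The (i,j)-th subsquare is
   alpha^{c_ij} beta^{d_ij} K, i.e. its (a,b) entry is K (a - c_ij, b - d_ij). *)
Definition expmx := {ffun ('I_3 * 'I_3) -> 'I_3}.

Definition keedwell_with (B : board) (c d : expmx) : bool :=
  (c (0, 0)%R == 0%R) && (d (0, 0)%R == 0%R) &&
  [forall i : 'I_3, forall j : 'I_3, forall a : 'I_3, forall b : 'I_3,
     B ((i, a), (j, b)) ==
     B ((0%R, (a - c (i, j))%R), (0%R, (b - d (i, j))%R))].

Definition keedwell (B : board) : Prop :=
  sudoku B /\ exists c d : expmx, keedwell_with B c d.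

Definition quasi_linear (m : expmx) : bool :=
  [forall i : 'I_3, forall j : 'I_3, m (i, j) == (m (i, 0%R) + m (0%R, j))%R].

(* linearity degree: number of quasi-linear exponent matrices among the
   (unique) pair {c_ij}, {d_ij} of B; 0 by convention if B is not Keedwell *)
Definition linearity_degree (B : board) : nat :=
  match [pick cd : (expmx * expmx)%type | keedwell_with B cd.1 cd.2] with
  | Some cd => (quasi_linear cd.1 : nat) + (quasi_linear cd.2 : nat)
  | None => 0
  end.

Definition inGk (g : G9elt) : Prop :=
  inG9 g /\ forall B : board, keedwell B -> keedwell (gact9 g B).

(* Main.v *)
Require Import Defs.
From mathcomp Require Import all_boot all_order all_algebra all_fingroup.
From mathcomp Require Import ring.
Set Implicit Arguments. Unset Strict Implicit. Unset Printing Implicit Defensive.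
Import GRing.Theory.

Definition coh (S : Idx -> 'I_3 -> {set 'I_9}) : bool :=
  [forall R : Idx, forall R' : Idx,
     [exists j, S R j == S R' j] ==> [forall j, S R j == S R' j]].

Definition Sset (B : board) (R : Idx) (j : 'I_3) : {set 'I_9} :=
  [set B (R, (j, b)) | b : 'I_3].
Definition Cset (B : board) (C : Idx) (i : 'I_3) : {set 'I_9} :=
  [set B ((i, a), C) | a : 'I_3].

Definition inv9 (B : board) : nat := (coh (Sset B) : nat) + (coh (Cset B) : nat).

Lemma coh_imp (S S' : Idx -> 'I_3 -> {set 'I_9}) (phi : Idx -> Idx) (pi : 'I_3 -> 'I_3) :
  (forall R j, S' R j = S (phi R) (pi j)) -> bijective pi -> coh S -> coh S'.
Proof.
move=> E [pi' K1 K2] /forallP H; apply/forallP => R; apply/forallP => R'.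
apply/implyP => /existsP [j0]; rewrite !E => /eqP e.
move/forallP: (H (phi R)) => /(_ (phi R')) /implyP.
have -> : [exists j, S (phi R) j == S (phi R') j] by apply/existsP; exists (pi j0); rewrite e.
move=> /(_ isT) /forallP H2; apply/forallP => j; rewrite !E; exact: H2.
Qed.

Lemma coh_eq (S S' : Idx -> 'I_3 -> {set 'I_9}) (phi : Idx -> Idx) (pi : 'I_3 -> 'I_3) :
  (forall R j, S' R j = S (phi R) (pi j)) -> bijective phi -> bijective pi -> coh S' = coh S.
Proof.
move=> E [phi' P1 P2] [pi' Q1 Q2]; apply/idP/idP.
- apply: (coh_imp (phi := phi') (pi := pi')); last by exists pi.
  by move=> R j; rewrite E P2 Q2.
- apply: (coh_imp E); by exists pi'.
Qed.

Lemma coh_map (S S' : Idx -> 'I_3 -> {set 'I_9}) (h : 'I_9 -> 'I_9) :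
  injective h -> (forall R j, S' R j = h @: S R j) -> coh S' = coh S.
Proof.
move=> hi E; rewrite /coh; apply: eq_forallb => R; apply: eq_forallb => R'.
have e : forall j, (S' R j == S' R' j) = (S R j == S R' j).
  by move=> j; rewrite !E; apply/eqP/eqP => [/(imset_inj hi)|->].
congr (_ ==> _); [apply: eq_existsb | apply: eq_forallb] => j; exact: e.
Qed.

Lemma imset_reidx (T : finType) (F : 'I_3 -> T) (h : 'I_3 -> 'I_3) :
  bijective h -> [set F (h a) | a : 'I_3] = [set F a | a : 'I_3].
Proof.
move=> [h' K1 K2]; apply/setP => x; apply/imsetP/imsetP => [[a _ ->]|[a _ ->]].
  by exists (h a).
by exists (h' a); rewrite ?K2.
Qed.

Definition comp (B : board) (f : Cell -> Cell) : board := [ffun x => B (f x)].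

Lemma bij_perm (T : finType) (s : {perm T}) : bijective s.
Proof. by exists (s^-1)%g => x; rewrite ?permK ?permKV. Qed.

Lemma bij_id (T : Type) : bijective (@id T).
Proof. by exists id. Qed.

Lemma inv_band B s : inv9 (comp B (band_f s)) = inv9 B.
Proof.
rewrite /inv9; congr (nat_of_bool _ + nat_of_bool _).
- apply: (coh_eq (phi := fun R => (s R.1, R.2)) (pi := id)).
  + by move=> R j; rewrite /Sset; apply: eq_imset => b; rewrite ffunE.
  + by exists (fun R => ((s^-1)%g R.1, R.2)) => -[i a] /=; rewrite ?permK ?permKV.
  + exact: bij_id.
- apply: (coh_eq (phi := id) (pi := s)).
  + by move=> R j; rewrite /Cset; apply: eq_imset => b; rewrite ffunE.
  + exact: bij_id.
  + exact: bij_perm.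
Qed.

Lemma inv_pillar B s : inv9 (comp B (pillar_f s)) = inv9 B.
Proof.
rewrite /inv9; congr (nat_of_bool _ + nat_of_bool _).
- apply: (coh_eq (phi := id) (pi := s)).
  + by move=> R j; rewrite /Sset; apply: eq_imset => b; rewrite ffunE.
  + exact: bij_id.
  + exact: bij_perm.
- apply: (coh_eq (phi := fun R => (s R.1, R.2)) (pi := id)).
  + by move=> R j; rewrite /Cset; apply: eq_imset => b; rewrite ffunE.
  + by exists (fun R => ((s^-1)%g R.1, R.2)) => -[i a] /=; rewrite ?permK ?permKV.
  + exact: bij_id.
Qed.

Lemma bij_cond (i0 : 'I_3) (s : {perm 'I_3}) :
  bijective (fun R : Idx => (R.1, if R.1 == i0 then s R.2 else R.2)).
Proof.
exists (fun R : Idx => (R.1, if R.1 == i0 then (s^-1)%g R.2 else R.2)) => -[i a] /=;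
  by case: (i == i0); rewrite ?permK ?permKV.
Qed.

Lemma bij_cond1 (b : bool) (s : {perm 'I_3}) :
  bijective (fun a : 'I_3 => if b then s a else a).
Proof. by case: b; [exact: bij_perm | exact: bij_id]. Qed.

Lemma inv_row B i0 s : inv9 (comp B (row_f i0 s)) = inv9 B.
Proof.
rewrite /inv9; congr (nat_of_bool _ + nat_of_bool _).
- apply: (coh_eq (phi := fun R : Idx => (R.1, if R.1 == i0 then s R.2 else R.2)) (pi := id)).
  + by move=> R j; rewrite /Sset; apply: eq_imset => b; rewrite ffunE.
  + exact: bij_cond.
  + exact: bij_id.
- apply: (coh_eq (phi := id) (pi := id)); last 2 first.
  + exact: bij_id.
  + exact: bij_id.
  move=> R j; rewrite /Cset.
  rewrite -(imset_reidx (fun a => B ((j, a), R)) (bij_cond1 (j == i0) s)).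
  by apply: eq_imset => b; rewrite ffunE.
Qed.

Lemma inv_col B j0 s : inv9 (comp B (col_f j0 s)) = inv9 B.
Proof.
rewrite /inv9; congr (nat_of_bool _ + nat_of_bool _).
- apply: (coh_eq (phi := id) (pi := id)); last 2 first.
  + exact: bij_id.
  + exact: bij_id.
  move=> R j; rewrite /Sset.
  rewrite -(imset_reidx (fun b => B (R, (j, b))) (bij_cond1 (j == j0) s)).
  by apply: eq_imset => b; rewrite ffunE.
- apply: (coh_eq (phi := fun R : Idx => (R.1, if R.1 == j0 then s R.2 else R.2)) (pi := id)).
  + by move=> R j; rewrite /Cset; apply: eq_imset => b; rewrite ffunE.
  + exact: bij_cond.
  + exact: bij_id.
Qed.

Lemma inv_transp B : inv9 (comp B transp_f) = inv9 B.
Proof.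
rewrite /inv9 addnC; congr (nat_of_bool _ + nat_of_bool _).
- apply: (coh_eq (phi := id) (pi := id)); last 2 first.
  + exact: bij_id.
  + exact: bij_id.
  by move=> R j; rewrite /Cset /Sset; apply: eq_imset => b; rewrite ffunE.
- apply: (coh_eq (phi := id) (pi := id)); last 2 first.
  + exact: bij_id.
  + exact: bij_id.
  by move=> R j; rewrite /Cset /Sset; apply: eq_imset => b; rewrite ffunE.
Qed.

Definition HS : {set {perm Cell}} :=
  [set p : {perm Cell} | [forall B : board, inv9 (comp B p) == inv9 B]].

Lemma HS_group_set : group_set HS.
Proof.
apply/group_setP; split.
  rewrite inE; apply/forallP => B.
  by apply/eqP; congr inv9; apply/ffunP => x; rewrite ffunE perm1.
move=> p q; rewrite !inE => /forallP Hp /forallP Hq.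
apply/forallP => B.
have -> : comp B (p * q)%g = comp (comp B q) p.
  by apply/ffunP => x; rewrite !ffunE permM.
by rewrite (eqP (Hp _)) (eqP (Hq _)).
Qed.

Canonical HS_group := Group HS_group_set.

Lemma comp_ext B (p : {perm Cell}) f : (forall x, p x == f x) -> comp B p = comp B f.
Proof. by move=> H; apply/ffunP => x; rewrite !ffunE (eqP (H x)). Qed.

Lemma H9_sub : H9 \subset HS.
Proof.
rewrite /H9 (gen_subG _ HS_group); apply/subsetP => p.
rewrite !inE => H; apply/forallP => B; apply/eqP.
case/orP: H => [/orP [/orP [/orP [] | ] | ] | ].
- by case/existsP => s /forallP /comp_ext ->; exact: inv_band.
- by case/existsP => i0 /existsP [s /forallP /comp_ext ->]; exact: inv_row.
- by case/existsP => s /forallP /comp_ext ->; exact: inv_pillar.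
- by case/existsP => i0 /existsP [s /forallP /comp_ext ->]; exact: inv_col.
- by move/forallP /comp_ext ->; exact: inv_transp.
Qed.

Lemma inv_gact g B : inG9 g -> inv9 (gact9 g B) = inv9 B.
Proof.
move=> Hg.
have Hi : ((g.1)^-1)%g \in HS by apply: (subsetP H9_sub); rewrite groupV.
have -> : gact9 g B = [ffun x => g.2 (comp B ((g.1)^-1)%g x)].
  by apply/ffunP => x; rewrite !ffunE.
move: Hi; rewrite inE => /forallP /(_ B) /eqP <-.
rewrite /inv9; congr (nat_of_bool _ + nat_of_bool _).
- apply: (coh_map (h := g.2) (@perm_inj _ g.2)) => R j.
  by rewrite /Sset -imset_comp; apply: eq_imset => b; rewrite ffunE.
- apply: (coh_map (h := g.2) (@perm_inj _ g.2)) => R j.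
  by rewrite /Cset -imset_comp; apply: eq_imset => b; rewrite ffunE.
Qed.

Lemma arith_coh (m : 'I_3 -> 'I_3 -> 'I_3) : m 0%R 0%R = 0%R ->
  [forall u, forall v, m u v == (m u 0%R + m 0%R v)%R] =
  [forall R : Idx, forall R' : Idx,
     [exists j, (R.2 - m R.1 j)%R == (R'.2 - m R'.1 j)%R] ==>
     [forall j, (R.2 - m R.1 j)%R == (R'.2 - m R'.1 j)%R]].
Proof.
move=> m00; apply/idP/idP.
- move=> /forallP H; apply/forallP => -[i a]; apply/forallP => -[i' a'] /=.
  have H' : forall u v, m u v = (m u 0 + m 0 v)%R by move=> u v; exact/eqP/(forallP (H u)).
  apply/implyP => /existsP [j0 /eqP e]; apply/forallP => j; apply/eqP.
  rewrite H' in e; rewrite [in RHS]H' in e.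
  have sh : forall x y, (x - (y + m 0%R j) = x - (y + m 0%R j0) + (m 0%R j0 - m 0%R j))%R.
    by move=> x y; ring.
  by rewrite H' [in RHS]H' !sh e.
- move=> /forallP H; apply/forallP => u; apply/forallP => v; apply/eqP.
  move/forallP: (H (u, m u 0%R)) => /(_ (0%R, 0%R)) /implyP /=.
  have -> : [exists j, (m u 0 - m u j)%R == (0 - m 0 j)%R].
    by apply/existsP; exists 0%R; rewrite m00 !subrr.
  move=> /(_ isT) /forallP /(_ v) /eqP e.
  have -> : m u v = (m u 0%R - (m u 0%R - m u v))%R by ring.
  rewrite e; ring.
Qed.

Lemma K_inj (B : board) a b a' b' : sudoku B ->
  B ((0%R, a), (0%R, b)) = B ((0%R, a'), (0%R, b')) -> a = a' /\ b = b'.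
Proof.
move=> /andP [_ /forallP /(_ 0%R) /forallP /(_ 0%R) /forallP
  /(_ (B ((0%R, a), (0%R, b)))) /cards1P [z Hz]] e.
have h1 : ((0%R, a), (0%R, b)) \in [set z] by rewrite -Hz !inE /=.

have h2 : ((0%R, a'), (0%R, b')) \in [set z] by rewrite -Hz !inE /= e.
by move: h1 h2; rewrite !inE => /eqP <- /eqP [-> ->].
Qed.

Section KW.
Variables (B : board) (c d : expmx).
Hypothesis sB : sudoku B.
Hypothesis kw : keedwell_with B c d.

Let K x y := B ((0%R, x), (0%R, y)).

Lemma kwE i a j b : B ((i, a), (j, b)) = K (a - c (i, j))%R (b - d (i, j))%R.
Proof. by case/andP: kw => _ /forallP /(_ i) /forallP /(_ j) /forallP /(_ a) /forallP /(_ b) /eqP. Qed.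

Lemma bij_sub (e : 'I_3) : bijective (fun b : 'I_3 => (b - e)%R).
Proof. by exists (fun y => y + e)%R => y; rewrite ?subrK ?addrK. Qed.

Lemma Sset_eq R R' j :
  (Sset B R j == Sset B R' j) = ((R.2 - c (R.1, j))%R == (R'.2 - c (R'.1, j))%R).
Proof.
have E : forall R, Sset B R j = [set K (R.2 - c (R.1, j))%R y | y : 'I_3].
  move=> [i a]; rewrite /Sset -(imset_reidx (K (a - c (i, j))%R) (bij_sub (d (i, j)))).
  by apply: eq_imset => b /=; rewrite kwE.
rewrite !E; apply/eqP/eqP => [e|->] //.
have : K (R.2 - c (R.1, j))%R 0%R \in [set K (R'.2 - c (R'.1, j))%R y | y : 'I_3].
  by rewrite -e; apply/imsetP; exists 0%R.
by case/imsetP => y _ /K_inj [] // -> _.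
Qed.

Lemma Cset_eq C C' i :
  (Cset B C i == Cset B C' i) = ((C.2 - d (i, C.1))%R == (C'.2 - d (i, C'.1))%R).
Proof.
have E : forall C, Cset B C i = [set K x (C.2 - d (i, C.1))%R | x : 'I_3].
  move=> [j b]; rewrite /Cset -(imset_reidx (fun x => K x (b - d (i, j))%R) (bij_sub (c (i, j)))).
  by apply: eq_imset => a /=; rewrite kwE.
rewrite !E; apply/eqP/eqP => [e|->] //.
have : K 0%R (C.2 - d (i, C.1))%R \in [set K x (C'.2 - d (i, C'.1))%R | x : 'I_3].
  by rewrite -e; apply/imsetP; exists 0%R.
by case/imsetP => y _ /K_inj [] // _ ->.
Qed.

Lemma rowcohE : coh (Sset B) = quasi_linear c.
Proof.
case/andP: kw => /andP [/eqP c0 _] _.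
rewrite /quasi_linear (arith_coh (m := fun u v => c (u, v))) //.
apply: eq_forallb => R; apply: eq_forallb => R'.
by congr (_ ==> _); [apply: eq_existsb | apply: eq_forallb] => j; rewrite Sset_eq.
Qed.

Lemma colcohE : coh (Cset B) = quasi_linear d.
Proof.
case/andP: kw => /andP [_ /eqP d0] _.
have -> : quasi_linear d = [forall u, forall v, d (v, u) == (d (0%R, u) + d (v, 0%R))%R].
  apply/forallP/forallP => H u.
    by apply/forallP => v; rewrite addrC; exact: (forallP (H v)).
  by apply/forallP => v; rewrite addrC; exact: (forallP (H v)).
rewrite (arith_coh (m := fun u v => d (v, u))) //.
apply: eq_forallb => R; apply: eq_forallb => R'.
by congr (_ ==> _); [apply: eq_existsb | apply: eq_forallb] => j; rewrite Cset_eq.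
Qed.

End KW.

Lemma degE B : keedwell B -> linearity_degree B = inv9 B.
Proof.
move=> [sB [c [d kw]]]; rewrite /linearity_degree.
case: pickP => [cd /= kw'|/(_ (c, d)) /=]; last by rewrite kw.
by rewrite /inv9 (rowcohE sB kw') (colcohE sB kw').
Qed.

Theorem lemma3p6 (B : board) (g : G9elt) :
  keedwell B -> inGk g ->
  keedwell (gact9 g B) /\ linearity_degree (gact9 g B) = linearity_degree B.
Proof.
move=> kB [g9 Hg]; have kB' := Hg B kB; split => //.
by rewrite !degE // inv_gact.
Qed.
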